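(* Let $P$ be the poset on ground set $\{x_1,x_2,x_3,x_4,y,z\}$ whose strict comparabilities are exactly $x_1<x_2<x_3<x_4$ (together with those implied by transitivity: $x_1<x_3$, $x_1<x_4$, $x_2<x_4$), $x_1<z$, $x_2<z$, and $y<x_4$; all other pairs of distinct elements are incomparable. Then $P$ is not a unit OC interval order, but $P$ has a unit mixed interval representation, for instance $x_1\mapsto[0,1]$, $x_2\mapsto(1,2)$, $y\mapsto[1,2]$, $x_3\mapsto[2,3)$, $z\mapsto[2,3]$, $x_4\mapsto[3,4]$.
   Context: A finite poset is a unit OC interval order if each element $x$ can be assigned a real interval $I_x$ of length $1$ which is either open $(a,a+1)$ or closed $[a,a+1]$, such that for distinct $x,y$, $x<y$ if and only if $I_x$ and $I_y$ are disjoint and every point of $I_x$ is less than every point of $I_y$. A unit mixed interval representation is defined in the same way except that each $I_x$ may be any of $[a,a+1]$, $(a,a+1)$, $(a,a+1]$, $[a,a+1)$. *)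

(* Defs.v *)
From Stdlib Require Import Reals.
Open Scope R_scope.

(* A unit interval of the real line: left endpoint a, length 1, with
   flags saying whether the left/right endpoint is excluded.
   (lopen=false, ropen=false) = [a,a+1], (true,true) = (a,a+1),
   (true,false) = (a,a+1], (false,true) = [a,a+1). *)
Record unit_interval := UI { left_end : R; lopen : bool; ropen : bool }.

Definition in_ui (I : unit_interval) (p : R) : Prop :=
  (if lopen I then left_end I < p else left_end I <= p) /\
  (if ropen I then p < left_end I + 1 else p <= left_end I + 1).

Definition ui_before (I J : unit_interval) : Prop :=
  (forall p, ~ (in_ui I p /\ in_ui J p)) /\
  (forall p q, in_ui I p -> in_ui J q -> p < q).

Definition is_unit_rep {T : Type} (lt : T -> T -> Prop)
  (kind : unit_interval -> Prop) (f : T -> unit_interval) : Prop :=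
  (forall x, kind (f x)) /\
  (forall x y, x <> y -> (lt x y <-> ui_before (f x) (f y))).

Definition oc_kind (I : unit_interval) : Prop :=
  (lopen I = false /\ ropen I = false) \/ (lopen I = true /\ ropen I = true).

Definition mixed_kind (I : unit_interval) : Prop := True.

Definition unit_OC_interval_order {T : Type} (lt : T -> T -> Prop) : Prop :=
  exists f, is_unit_rep lt oc_kind f.

Definition has_unit_mixed_rep {T : Type} (lt : T -> T -> Prop) : Prop :=
  exists f, is_unit_rep lt mixed_kind f.

Inductive elt := x1 | x2 | x3 | x4 | y | z.

Definition P_lt (u v : elt) : Prop :=
  match u, v with
  | x1, x2 | x2, x3 | x3, x4 | x1, x3 | x1, x4 | x2, x4 => True
  | x1, z | x2, z => True
  | y, x4 => True
  | _, _ => False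
  end.

Definition P_mixed_rep (u : elt) : unit_interval :=
  match u with
  | x1 => UI 0 false false
  | x2 => UI 1 true true
  | y  => UI 1 false false
  | x3 => UI 2 false true
  | z  => UI 2 false false
  | x4 => UI 3 false false
  end.

(* Main.v *)
Require Import Defs.
From Stdlib Require Import Reals Lra.
Open Scope R_scope.

Lemma in_int I p : left_end I < p < left_end I + 1 -> in_ui I p.
Proof. destruct I as [a l r]; unfold in_ui; simpl; intros [h1 h2];
  destruct l, r; split; lra. Qed.

Lemma in_bounds I p : in_ui I p -> left_end I <= p <= left_end I + 1.
Proof. destruct I as [a l r]; unfold in_ui; simpl; intros [h1 h2];
  destruct l, r; split; lra. Qed.

Lemma before_of I J : (forall p q, in_ui I p -> in_ui J q -> p < q) -> ui_before I J.
Proof. intros H; split; auto. intros p [h1 h2]. specialize (H p p h1 h2); lra. Qed.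

Lemma b_le I J : ui_before I J -> left_end I + 1 <= left_end J.
Proof.
  intros [_ H]. destruct (Rle_lt_dec (left_end I + 1) (left_end J)) as [h|h]; auto.
  exfalso. destruct (Rle_lt_dec (left_end J) (left_end I)) as [h'|h'].
  - assert (K := H (left_end I + /2) (left_end J + /2)
      (in_int I (left_end I + /2) ltac:(lra)) (in_int J (left_end J + /2) ltac:(lra))). lra.
  - set (p := (left_end J + left_end I + 1) / 2).
    assert (K := H p p (in_int I p ltac:(unfold p; lra)) (in_int J p ltac:(unfold p; lra))). lra.
Qed.

Lemma b_eq I J : ui_before I J -> left_end J = left_end I + 1 -> ropen I = false -> lopen J = true.
Proof.
  destruct I as [a l r], J as [b l' r']; simpl. intros [_ H] e hr. subst r.
  destruct l'; auto. exfalso.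
  assert (K := H (a+1) (a+1)). unfold in_ui in K; simpl in K.
  destruct l; (assert (a + 1 < a + 1); [apply K; split; (lra || (destruct r'; lra)) | lra]).
Qed.

Lemma nb_le I J : ~ ui_before I J -> left_end J <= left_end I + 1.
Proof.
  intros H. destruct (Rle_lt_dec (left_end J) (left_end I + 1)) as [h|h]; auto.
  exfalso; apply H, before_of. intros p q hp hq.
  apply in_bounds in hp; apply in_bounds in hq; lra.
Qed.

Lemma nb_eq I J : ~ ui_before I J -> left_end J = left_end I + 1 ->
  ropen I = false /\ lopen J = false.
Proof.
  destruct I as [a l r], J as [b l' r']; simpl. intros H e.
  destruct r, l'; auto; exfalso; apply H, before_of; unfold in_ui; simpl;
  intros p q [h1 h2] [h3 h4]; destruct l, r'; lra.
Qed.

Lemma nb_mid I J : (forall p q, in_ui I p -> in_ui J q -> p < q) ->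
  left_end J <= left_end I -> False.
Proof. intros H h. assert (K := H (left_end I + /2) (left_end J + /2)
  (in_int I (left_end I + /2) ltac:(lra)) (in_int J (left_end J + /2) ltac:(lra))). lra. Qed.

Lemma not_oc : ~ unit_OC_interval_order P_lt.
Proof.
  intros [f [Hk H]].
  assert (B : forall u v, u <> v -> P_lt u v -> ui_before (f u) (f v)).
  { intros u v n h; exact (proj1 (H u v n) h). }
  assert (NB : forall u v, u <> v -> ~ P_lt u v -> ~ ui_before (f u) (f v)).
  { intros u v n h hb; exact (h (proj2 (H u v n) hb)). }
  pose proof (b_le _ _ (B x1 x2 ltac:(discriminate) I)).
  pose proof (b_le _ _ (B x2 x3 ltac:(discriminate) I)).
  pose proof (b_le _ _ (B x3 x4 ltac:(discriminate) I)).
  pose proof (b_le _ _ (B y x4 ltac:(discriminate) I)).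
  pose proof (b_le _ _ (B x2 z ltac:(discriminate) I)).
  assert (N1 := NB x1 y ltac:(discriminate) (fun h => h)).
  assert (N2 := NB y x3 ltac:(discriminate) (fun h => h)).
  assert (N3 := NB y z ltac:(discriminate) (fun h => h)).
  assert (N4 := NB z x4 ltac:(discriminate) (fun h => h)).
  pose proof (nb_le _ _ N1). pose proof (nb_le _ _ N2).
  pose proof (nb_le _ _ N3). pose proof (nb_le _ _ N4).
  destruct (nb_eq _ _ N4 ltac:(lra)) as [_ h4].
  destruct (nb_eq _ _ N2 ltac:(lra)) as [_ h3].
  assert (K := Hk x3). unfold oc_kind in K.
  assert (r3 : ropen (f x3) = false) by (destruct K as [[a b]|[a b]]; congruence).
  pose proof (b_eq _ _ (B x3 x4 ltac:(discriminate) I) ltac:(lra) r3). congruence.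
Qed.

Lemma rep_ok : is_unit_rep P_lt mixed_kind P_mixed_rep.
Proof.
  split; [intros; exact I|].
  intros u v n; destruct u, v; try (exfalso; apply n; reflexivity); simpl;
  (split; [intros _; apply before_of; unfold in_ui; simpl; intros p q [h1 h2] [h3 h4]; lra
          | intros _; exact I])
  || (split; [intros [] | intros [Hd Hb]]).
  all: try (eapply nb_mid; [exact Hb | simpl; lra]).
  all: first
    [ apply (Hd 1); unfold in_ui; simpl; repeat split; lra
    | apply (Hd 2); unfold in_ui; simpl; repeat split; lra
    | apply (Hd 3); unfold in_ui; simpl; repeat split; lra
    | apply (Hd (3/2)); unfold in_ui; simpl; repeat split; lra
    | apply (Hd (5/2)); unfold in_ui; simpl; repeat split; lra
    ].
Qed.

Theorem mainTheorem5 :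
  ~ unit_OC_interval_order P_lt /\
  has_unit_mixed_rep P_lt /\
  is_unit_rep P_lt mixed_kind P_mixed_rep.
Proof.
  split; [exact not_oc|]. split; [exists P_mixed_rep|]; exact rep_ok.
Qed.
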